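(* Let $\hat\xi_1,\dots,\hat\xi_T\in\mathbb{R}^n$, $\kappa>0$, and let $\mathcal{U}\subseteq\mathcal{P}$ be nonempty, closed and convex, with $\hat\Sigma(p)$ positive definite for every $p\in\mathcal{U}$. For $p\in\mathcal{U}$ let $y^{\mathrm{RP}}(p)$ be the unique minimizer of $y\mapsto f_{\mathrm{RP}}(y,p)$ over $\mathbb{R}^n_{++}$ and set $\phi(p)=f_{\mathrm{RP}}(y^{\mathrm{RP}}(p),p)$. Let $(y^*,p^* )\in\mathbb{R}^n_{++}\times\mathcal{U}$ be a saddle point of $f_{\mathrm{RP}}$ on $\mathbb{R}^n_{++}\times\mathcal{U}$. Fix $\gamma>0$ and $p^0\in\mathcal{U}$, and define for $j\ge0$ $$y^j=y^{\mathrm{RP}}(p^j),\qquad p^{j+1}=\Pi_{\mathcal{U}}\big(p^j+\gamma\,\nabla_p f_{\mathrm{RP}}(y^j,p^j)\big),$$ where $\nabla_p f_{\mathrm{RP}}(y,p)=\tfrac12\hat\pi^2(y)-\hat\Theta(y)p$ and $\Pi_{\mathcal{U}}$ is the Euclidean projection onto $\mathcal{U}$. Suppose $L\ge0$ satisfies $\|\nabla_p f_{\mathrm{RP}}(y^j,p^j)\|_2\le L$ for all $j\ge0$. Then for every $k\ge1$, $$0\le \phi(p^* )-\frac1k\sum_{j=0}^{k-1}\phi(p^j)\le\frac{\|p^0-p^*\|_2^2}{2k\gamma}+\frac{\gamma L^2}{2}.$$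
   Context: $\mathcal{P}=\{p\in\mathbb{R}^T:p\ge0,\mathbf{1}^\top p=1\}$; $\mathbb{R}^n_{++}$ is the open positive orthant. $\hat\mu(p)=\sum_t p_t\hat\xi_t$, $\hat\Sigma(p)=\sum_t p_t(\hat\xi_t-\hat\mu(p))(\hat\xi_t-\hat\mu(p))^\top$. $\hat\pi(y)\in\mathbb{R}^T$ has entries $\hat\xi_t^\top y$, $\hat\pi^2(y)$ its entrywise square, $\hat\Theta(y)=\hat\pi(y)\hat\pi(y)^\top$, and $f_{\mathrm{RP}}(y,p)=\tfrac12\big(p^\top\hat\pi^2(y)-p^\top\hat\Theta(y)p\big)-\kappa\sum_{i=1}^n\ln y_i$. A saddle point $(y^*,p^* )$ means $f_{\mathrm{RP}}(y^*,p)\le f_{\mathrm{RP}}(y^*,p^* )\le f_{\mathrm{RP}}(y,p^* )$ for all $y\in\mathbb{R}^n_{++}$, $p\in\mathcal{U}$. (The paper phrases the bound on the gradient as a Lipschitz constant $L$ of $\nabla_p f_{\mathrm{RP}}$, used as a bound on the gradient norm along the iterates.) *)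

(* Defs.v *)
From HB Require Import structures.
From mathcomp Require Import all_boot all_order all_algebra.
From mathcomp Require Import all_classical all_reals all_analysis.
Set Implicit Arguments. Unset Strict Implicit. Unset Printing Implicit Defensive.
Import Order.TTheory GRing.Theory Num.Theory.
Import numFieldNormedType.Exports.
Local Open Scope ring_scope.
Local Open Scope classical_set_scope.

Section RP.
Variables (R : realType) (n T : nat).

Definition simplex (p : 'rV[R]_T) : Prop :=
  (forall t, 0 <= p ord0 t) /\ \sum_(t < T) p ord0 t = 1.

Definition posorth (y : 'rV[R]_n) : Prop := forall i, 0 < y ord0 i.

Definition sqnorm (m : nat) (v : 'rV[R]_m) : R := \sum_(i < m) v ord0 i ^+ 2.

Definition posdef (M : 'M[R]_n) : Prop :=
  forall v : 'rV[R]_n, v != 0 -> 0 < (v *m M *m v^T) ord0 ord0.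

Variable xi : 'I_T -> 'rV[R]_n.

Definition muhat (p : 'rV[R]_T) : 'rV[R]_n := \sum_(t < T) p ord0 t *: xi t.

Definition Sigmahat (p : 'rV[R]_T) : 'M[R]_n :=
  \sum_(t < T) p ord0 t *: ((xi t - muhat p)^T *m (xi t - muhat p)).

Definition pihat (y : 'rV[R]_n) : 'rV[R]_T :=
  \row_(t < T) \sum_(i < n) xi t ord0 i * y ord0 i.

Definition pihat2 (y : 'rV[R]_n) : 'rV[R]_T :=
  \row_(t < T) (pihat y ord0 t) ^+ 2.

Definition Thetahat (y : 'rV[R]_n) : 'M[R]_T := (pihat y)^T *m pihat y.

Definition fRP (kappa : R) (y : 'rV[R]_n) (p : 'rV[R]_T) : R :=
  2^-1 * ((p *m (pihat2 y)^T) ord0 ord0 - (p *m Thetahat y *m p^T) ord0 ord0)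
  - kappa * \sum_(i < n) ln (y ord0 i).

(* grad_p fRP(y,p) = 1/2 pihat^2(y) - Theta(y) p  (as a row vector; Theta symmetric) *)
Definition gradp (y : 'rV[R]_n) (p : 'rV[R]_T) : 'rV[R]_T :=
  2^-1 *: pihat2 y - (Thetahat y *m p^T)^T.

Definition is_proj (U : set 'rV[R]_T) (x z : 'rV[R]_T) : Prop :=
  U z /\ forall q, U q -> sqnorm (z - x) <= sqnorm (q - x).

Definition is_yRP (kappa : R) (p : 'rV[R]_T) (y : 'rV[R]_n) : Prop :=
  posorth y /\ forall y', posorth y' -> fRP kappa y p <= fRP kappa y' p.

Definition saddle (kappa : R) (U : set 'rV[R]_T) (ys : 'rV[R]_n) (ps : 'rV[R]_T) : Prop :=
  posorth ys /\ U ps /\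
  (forall p, U p -> fRP kappa ys p <= fRP kappa ys ps) /\
  (forall y, posorth y -> fRP kappa ys ps <= fRP kappa y ps).

End RP.

(* Main.v *)
Require Import Defs.
From HB Require Import structures.
From mathcomp Require Import all_boot all_order all_algebra.
From mathcomp Require Import all_classical all_reals all_analysis.
From mathcomp Require Import ring lra.
Set Implicit Arguments. Unset Strict Implicit. Unset Printing Implicit Defensive.
Import Order.TTheory GRing.Theory Num.Theory.
Import numFieldNormedType.Exports.
Local Open Scope ring_scope.
Local Open Scope classical_set_scope.

Section Dot.
Variable (R : realType).
Definition dot (m : nat) (u v : 'rV[R]_m) : R := \sum_(i < m) u ord0 i * v ord0 i.

Lemma dotC m (u v : 'rV[R]_m) : dot u v = dot v u.
Proof. by apply: eq_bigr => i _; rewrite mulrC. Qed.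
Lemma dotDl m (u v w : 'rV[R]_m) : dot (u + v) w = dot u w + dot v w.
Proof. by rewrite /dot -big_split; apply: eq_bigr => i _; rewrite mxE mulrDl. Qed.
Lemma dotNl m (u w : 'rV[R]_m) : dot (- u) w = - dot u w.
Proof. by rewrite /dot -sumrN; apply: eq_bigr => i _; rewrite mxE mulNr. Qed.
Lemma dotZl m a (u w : 'rV[R]_m) : dot (a *: u) w = a * dot u w.
Proof. by rewrite /dot mulr_sumr; apply: eq_bigr => i _; rewrite mxE mulrA. Qed.
Lemma dotBl m (u v w : 'rV[R]_m) : dot (u - v) w = dot u w - dot v w.
Proof. by rewrite dotDl dotNl. Qed.
Lemma dotDr m (u v w : 'rV[R]_m) : dot w (u + v) = dot w u + dot w v.
Proof. by rewrite dotC dotDl !(dotC w). Qed.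
Lemma dotBr m (u v w : 'rV[R]_m) : dot w (u - v) = dot w u - dot w v.
Proof. by rewrite dotC dotBl !(dotC w). Qed.
Lemma dotZr m a (u w : 'rV[R]_m) : dot w (a *: u) = a * dot w u.
Proof. by rewrite dotC dotZl dotC. Qed.
Lemma sqnormE m (u : 'rV[R]_m) : sqnorm u = dot u u.
Proof. by apply: eq_bigr => i _; rewrite expr2. Qed.
Lemma dot_ge0 m (u : 'rV[R]_m) : 0 <= dot u u.
Proof. by rewrite -sqnormE; apply: sumr_ge0 => i _; rewrite sqr_ge0. Qed.
Lemma sqnormN m (u : 'rV[R]_m) : sqnorm (- u) = sqnorm u.
Proof. by rewrite !sqnormE dotNl dotC dotNl opprK. Qed.

Lemma mx00_dot m (u v : 'rV[R]_m) : (u *m v^T) ord0 ord0 = dot u v.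
Proof. by rewrite mxE; apply: eq_bigr => i _; rewrite mxE. Qed.
End Dot.

Section F.
Variables (R : realType) (n T : nat) (xi : 'I_T -> 'rV[R]_n).

Lemma fRP_eq kappa y p : fRP xi kappa y p =
  2^-1 * (dot p (pihat2 xi y) - (dot (pihat xi y) p)^+2) - kappa * \sum_(i < n) ln (y ord0 i).
Proof.
rewrite /fRP mx00_dot /Thetahat.
congr (_ * (_ - _) - _).
rewrite mulmxA -(mulmxA (p *m _)).
rewrite mxE big_ord1 !mx00_dot expr2 dotC //.
Qed.

Lemma gradp_dot y p w : dot (gradp xi y p) w =
  2^-1 * dot (pihat2 xi y) w - dot (pihat xi y) p * dot (pihat xi y) w.
Proof.
rewrite /gradp dotBl dotZl; congr (_ - _).
rewrite -mx00_dot /Thetahat trmx_mul trmxK trmx_mul trmxK mulmxA.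
rewrite -(mulmxA (p *m _)) mxE big_ord1 !mx00_dot dotC //.
Qed.

Lemma concave_f kappa y p q :
  fRP xi kappa y q <= fRP xi kappa y p + dot (gradp xi y p) (q - p).
Proof.
rewrite !fRP_eq gradp_dot !dotBr (dotC (pihat2 xi y) q) (dotC (pihat2 xi y) p).
set a := dot (pihat xi y) q; set b := dot (pihat xi y) p.
set K := kappa * _. 
have : 0 <= (a - b)^+2 by rewrite sqr_ge0.
nra.
Qed.
End F.

Section Proj.
Variables (R : realType) (T : nat).

Lemma dot_expand (u w : 'rV[R]_T) t :
  dot (u + t *: w) (u + t *: w) = dot u u + 2 * t * dot u w + t^+2 * dot w w.
Proof.
rewrite !dotDl !dotDr !dotZl !dotZr (dotC w u); ring.
Qed.

Lemma proj_nonexp (U : set 'rV[R]_T) x z q :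
  convex_set U -> is_proj U x z -> U q -> sqnorm (z - q) <= sqnorm (x - q).
Proof.
move=> cU [Uz zmin] Uq.
set u := z - x; set w := q - z.
have key : forall t : R, 0 <= t -> t <= 1 -> 0 <= t * (2 * dot u w + t * dot w w).
  move=> t t0 t1.
  have Ut : U (z + t *: w).
    have := cU q z (Itv01 t0 t1) (mem_set Uq) (mem_set Uz).
    rewrite inE; congr U.
    rewrite /conv /= /w scalerBr scalerBl scale1r addrCA //.
  have := zmin _ Ut.
  have -> : z + t *: w - x = u + t *: w by rewrite /u addrAC.
  rewrite !sqnormE dot_expand.
  lra.
have dge0 : 0 <= dot u w.
  rewrite leNgt; apply/negP => dlt.
  have sge : 0 <= dot w w := dot_ge0 w.
  set d := dot u w in dlt key *; set s := dot w w in sge key *.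
  have sd : 0 < s - d by lra.
  have := key (- d / (s - d)).
  have t0 : 0 < - d / (s - d) by apply: divr_gt0; lra.
  have t1 : - d / (s - d) <= 1 by rewrite ler_pdivrMr // mul1r; lra.
  move=> /(_ (ltW t0) t1).
  set t := - d / (s - d) in t0 t1 *.
  have ht : t * (s - d) = - d by rewrite /t divfK // gt_eqF.
  nra.
have -> : x - q = - (u + w) by rewrite (addrC u w) /u /w addrA subrK opprB.
have -> : z - q = - w by rewrite /w opprB.
rewrite !sqnormN !sqnormE; clearbody u w; rewrite dotDl !dotDr (dotC w u).

have := dot_ge0 u; lra.
Qed.
End Proj.

Theorem theorem4 (R : realType) (n T : nat) (xi : 'I_T -> 'rV[R]_n)
  (kappa : R) (U : set 'rV[R]_T)
  (yRP : 'rV[R]_T -> 'rV[R]_n)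
  (ystar : 'rV[R]_n) (pstar : 'rV[R]_T)
  (gamma : R) (p0 : 'rV[R]_T) (L : R) (ps : nat -> 'rV[R]_T) :
  0 < kappa ->
  U !=set0 -> closed U -> convex_set U -> U `<=` @simplex R T ->
  (forall p, U p -> posdef (Sigmahat xi p)) ->
  (forall p, U p -> is_yRP xi kappa p (yRP p)) ->
  saddle xi kappa U ystar pstar ->
  0 < gamma -> U p0 ->
  ps 0%N = p0 ->
  (forall j : nat, is_proj U (ps j + gamma *: gradp xi (yRP (ps j)) (ps j)) (ps j.+1)) ->
  0 <= L ->
  (forall j : nat, Num.sqrt (sqnorm (gradp xi (yRP (ps j)) (ps j))) <= L) ->
  let phi := fun p => fRP xi kappa (yRP p) p in
  forall k : nat, (0 < k)%N ->
    0 <= phi pstar - k%:R^-1 * \sum_(j < k) phi (ps j) /\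
    phi pstar - k%:R^-1 * \sum_(j < k) phi (ps j)
      <= sqnorm (p0 - pstar) / (2 * k%:R * gamma) + gamma * L ^+ 2 / 2.
Proof.
move=> _ _ _ cU _ _ hyRP [ysp [Ups [sad1 sad2]]] g0 Up0 e0 hproj L0 hL phi k k0.
have Uj : forall j, U (ps j) by case=> [|j]; [rewrite e0 | case: (hproj j)].
have phis : phi pstar = fRP xi kappa ystar pstar.
  have [yp ym] := hyRP _ Ups.
  apply/le_anti; rewrite ym //= sad2 //; exact: yp.
have phile : forall p, U p -> phi p <= phi pstar.
  move=> p Up; rewrite phis; apply: le_trans (sad1 _ Up).
  by have [_ ym] := hyRP _ Up; apply: ym.
pose g j := gradp xi (yRP (ps j)) (ps j).
have step : forall j, 2 * gamma * (phi pstar - phi (ps j)) + sqnorm (ps j.+1 - pstar)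
    <= sqnorm (ps j - pstar) + gamma ^+ 2 * L ^+ 2.
  move=> j.
  have h1 : phi pstar <= fRP xi kappa (yRP (ps j)) pstar.
    have [_ ym] := hyRP _ Ups; apply: ym.
    by have [yp _] := hyRP _ (Uj j).
  have h2 := concave_f xi kappa (yRP (ps j)) (ps j) pstar.
  have h3 := proj_nonexp cU (hproj j) Ups.
  have e1 : ps j + gamma *: gradp xi (yRP (ps j)) (ps j) - pstar =
     (ps j - pstar) + gamma *: g j by rewrite /g addrAC.
  rewrite e1 in h3.
  have h4 : dot (g j) (g j) <= L ^+ 2.
    have := hL j; rewrite -/(g j) sqnormE => hs.
    have s0 := dot_ge0 (g j).
    rewrite -(sqr_sqrtr s0).
    have := sqrtr_ge0 (dot (g j) (g j)); nra.
  rewrite !sqnormE dot_expand in h3 *.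
  have e : dot (gradp xi (yRP (ps j)) (ps j)) (pstar - ps j) = - dot (ps j - pstar) (g j).
    by rewrite dotC -/(g j) -dotNl opprB.
  rewrite e in h2.
  have g2 : 0 <= gamma ^+ 2 by rewrite sqr_ge0.
  rewrite /phi in h1 *. nra.
pose S m := \sum_(j < m) (phi pstar - phi (ps j)).
have sumS : forall m, 2 * gamma * S m + sqnorm (ps m - pstar)
    <= sqnorm (p0 - pstar) + m%:R * (gamma ^+ 2 * L ^+ 2).
  elim=> [|m IH]; first by rewrite /S big_ord0 mulr0 add0r mul0r addr0 e0.
  rewrite /S big_ord_recr /= -/(S m) mulrDr -natr1 mulrDl mul1r.
  have := step m; lra.
set K := k%:R.
have K0 : 0 < K by rewrite ltr0n.
have E : phi pstar - K^-1 * \sum_(j < k) phi (ps j) = K^-1 * S k.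
  rewrite /S [in RHS]sumrB [in RHS]sumr_const card_ord -mulr_natr -/K mulrBr.
  congr (_ - _); field; rewrite gt_eqF //.
rewrite E.
have S0 : 0 <= S k by apply: sumr_ge0 => j _; rewrite subr_ge0 phile.
split; first by rewrite mulr_ge0 // invr_ge0 ltW.
have n0 : 0 <= sqnorm (ps k - pstar) by rewrite sqnormE dot_ge0.
have hS := sumS k.
have -> : sqnorm (p0 - pstar) / (2 * K * gamma) + gamma * L ^+ 2 / 2 =
   K^-1 * ((sqnorm (p0 - pstar) + K * (gamma ^+ 2 * L ^+ 2)) / (2 * gamma)).
  field; rewrite ?gt_eqF //.
apply: ler_wpM2l; first by rewrite invr_ge0 ltW.
rewrite ler_pdivlMr ?mulr_gt0 //; lra.
Qed.
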